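(* For all computation predicates $b,c\subseteq\Sigma^+$ and every state predicate $o\subseteq\Sigma$: $(b*c)\cap\mathrm{past}(o)=(b\cap\mathrm{past}(o))*c$.
   Context: $(\Sigma,*,\mathsf{emp})$ is a separation algebra (partial commutative monoid with a set of units such that each state has a unit with $s*1=s$ and distinct units do not compose). Computations $\Sigma^+$ (nonempty finite sequences of states) form a separation algebra with $\sigma.s*\tau.t$ defined iff $\sigma=\tau$ and $s*t$ is defined, equal to $\sigma.(s*t)$. For sets of computations, $b*c=\{x*y\mid x\in b,y\in c,x*y\text{ defined}\}$. For a state predicate $o$, $\mathrm{past}(o)=\Sigma^*.o.\Sigma^+$, the computations containing a state in $o$ strictly before their last state. *)

(* Defs.v *)
From Stdlib Require Import List.
Import ListNotations.
Set Implicit Arguments.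

Record sep_alg (S : Type) := SepAlg {
  sa_op : S -> S -> option S;
  sa_emp : S -> Prop;
  sa_comm : forall x y, sa_op x y = sa_op y x;
  sa_assoc : forall x y z,
    match sa_op x y with Some xy => sa_op xy z | None => None end =
    match sa_op y z with Some yz => sa_op x yz | None => None end;
  sa_unit : forall s, exists u, sa_emp u /\ sa_op s u = Some s;
  sa_units_disjoint : forall u v, sa_emp u -> sa_emp v -> u <> v -> sa_op u v = None
}.

(* A computation sigma.s in Sigma^+ : a (possibly empty) history sigma in
   Sigma^* followed by a last state s. *)
Record comp (S : Type) := Comp { hist : list S; lst : S }.

(* x * y is defined and equals z, in the separation algebra of computations:
   sigma.s * tau.t defined iff sigma = tau and s*t defined, = sigma.(s*t). *)
Definition comp_join (S : Type) (A : sep_alg S) (x y z : comp S) : Prop :=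
  hist x = hist y /\ hist z = hist x /\ sa_op A (lst x) (lst y) = Some (lst z).

Definition comp_star (S : Type) (A : sep_alg S) (b c : comp S -> Prop) : comp S -> Prop :=
  fun z => exists x y, b x /\ c y /\ comp_join A x y z.

Definition setI (T : Type) (b c : T -> Prop) : T -> Prop := fun x => b x /\ c x.

(* past(o) = Sigma^*. o . Sigma^+ : some state in o occurs strictly before the
   last state, i.e. in the history. *)
Definition past (S : Type) (o : S -> Prop) : comp S -> Prop :=
  fun x => exists s, In s (hist x) /\ o s.

Definition set_eq (T : Type) (b c : T -> Prop) : Prop := forall x, b x <-> c x.

(* Main.v *)
Require Import Defs.
From Stdlib Require Import List.

Theorem lemma4p5 (S : Type) (A : sep_alg S) (b c : comp S -> Prop) (o : S -> Prop) :
  set_eq (setI (comp_star A b c) (past o)) (comp_star A (setI b (past o)) c).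
Proof.
  intro z; split.
  - intros [[x [y [Hb [Hc [H1 [H2 H3]]]]]] [s [Hs Ho]]].
    exists x, y; repeat split; auto.
    exists s; split; auto; rewrite <- H2; exact Hs.
  - intros [x [y [[Hb [s [Hs Ho]]] [Hc [H1 [H2 H3]]]]]].
    split.
    + exists x, y; repeat split; auto.
    + exists s; split; auto; rewrite H2; exact Hs.
Qed.
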